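(* Let $q$ be a prime power, $n\ge2$, and let $\mathrm{M}=\{(m_{i,j})\in\mathrm{H}_n(q^2): m_{i,i}=0 \text{ for all } 1\le i\le n\}$ be the additive $2$-code of Hermitian matrices with zero main diagonal. Then $\mathrm{M}$ is not a $t$-design for any $t$ with $1\le t\le n$.
   Context: For $a\in\mathbb{F}_{q^2}$ write $\bar a=a^q$; $A^*$ is the conjugate transpose; $\mathrm{H}_n(q^2)=\{A\in\mathbb{F}_{q^2}^{n\times n}:A^*=A\}$. Designs: fix a nontrivial character $\chi$ of $(\mathbb{F}_q,+)$, $\langle A,B\rangle=\chi(\mathrm{tr}(A^*B))$; $\mathrm{H}_k$ is the set of rank-$k$ matrices in $\mathrm{H}_n(q^2)$; $Q_k(i)=\sum_{A\in\mathrm{H}_k}\langle A,B\rangle$ for $B\in\mathrm{H}_i$; for $\mathrm{C}\subseteq\mathrm{H}_n(q^2)$ the inner distribution is $A_i=|\{(X,Y)\in\mathrm{C}^2:\mathrm{rk}(X-Y)=i\}|/|\mathrm{C}|$ and the dual inner distribution is $A'_k=\sum_iQ_k(i)A_i$; $\mathrm{C}$ is a $t$-design if $A'_1=\dots=A'_t=0$. *)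

(* Defs.v *)
From HB Require Import structures.
From mathcomp Require Import all_boot all_order all_algebra all_field.
Set Implicit Arguments. Unset Strict Implicit. Unset Printing Implicit Defensive.
Import Order.TTheory GRing.Theory Num.Theory.
Local Open Scope ring_scope.

Section Herm.
Variables (q : nat) (F : finFieldType).

(* conjugation a |-> a^q on F_{q^2} *)
Definition conjq (a : F) : F := a ^+ q.

Definition mxstar n (A : 'M[F]_n) : 'M[F]_n := (map_mx conjq A)^T.

Definition hermitian n (A : 'M[F]_n) : bool := mxstar A == A.

Definition herm_rank n (k : nat) : {set 'M[F]_n} :=
  [set A : 'M[F]_n | hermitian A & \rank A == k].

Definition pairing (chi : F -> algC) n (A B : 'M[F]_n) : algC :=
  chi (\tr (mxstar A *m B)).

Definition Qk (chi : F -> algC) n (k i : nat) : algC :=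
  \sum_(A in herm_rank n k) pairing chi A (pid_mx i).

Definition inner_dist n (C : {set 'M[F]_n}) (i : nat) : algC :=
  #|[set XY in setX C C | \rank (XY.1 - XY.2) == i]|%:R / #|C|%:R.

Definition dual_inner_dist (chi : F -> algC) n (C : {set 'M[F]_n}) (k : nat)
  : algC := \sum_(i < n.+1) Qk chi n k i * inner_dist C i.

Definition is_design (chi : F -> algC) n (C : {set 'M[F]_n}) (t : nat) : Prop :=
  forall k : nat, (1 <= k <= t)%N -> dual_inner_dist chi C k = 0.

Definition zero_diag_herm n : {set 'M[F]_n} :=
  [set A : 'M[F]_n | hermitian A & [forall i, A i i == 0]].

(* chi is a nontrivial character of (F_q,+), where F_q = {a | a^q = a} *)
Definition nontrivial_additive_char (chi : F -> algC) : Prop :=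
  [/\ chi 0 = 1,
      (forall a b : F, a ^+ q = a -> b ^+ q = b -> chi (a + b) = chi a * chi b)
    & exists a : F, a ^+ q = a /\ chi a != 1].

End Herm.

(* Main.v *)
Require Import Defs.
From HB Require Import structures.
From mathcomp Require Import all_boot all_order all_algebra all_field.
From mathcomp Require Import zify.
Set Implicit Arguments. Unset Strict Implicit. Unset Printing Implicit Defensive.
Import Order.TTheory GRing.Theory Num.Theory.
Local Open Scope ring_scope.

Section Work.
Variables (q : nat) (F : finFieldType).
Hypothesis Hq : (1 < q)%N.
Hypothesis HD : forall x y : F, (x + y) ^+ q = x ^+ q + y ^+ q.
Hypothesis HK : forall x : F, (x ^+ q) ^+ q = x.
Hypothesis Hcard : #|F| = (q ^ 2)%N.

Lemma cj0 : (0 : F) ^+ q = 0. Proof. by rewrite expr0n; case: q Hq. Qed.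
Lemma cj1 : (1 : F) ^+ q = 1. Proof. exact: expr1n. Qed.
Lemma cjN (x : F) : (- x) ^+ q = - x ^+ q.
Proof. by apply/eqP; rewrite -subr_eq0 opprK -HD addNr cj0. Qed.
Lemma cjB (x y : F) : (x - y) ^+ q = x ^+ q - y ^+ q.
Proof. by rewrite HD cjN. Qed.
Lemma cjM (x y : F) : (x * y) ^+ q = x ^+ q * y ^+ q.
Proof. exact: exprMn. Qed.
Lemma cjV (x : F) : (x^-1) ^+ q = (x ^+ q)^-1.
Proof. exact: exprVn. Qed.
Lemma cj_sum I (r : seq I) (P : pred I) (f : I -> F) :
  (\sum_(i <- r | P i) f i) ^+ q = \sum_(i <- r | P i) (f i) ^+ q.
Proof. by apply: (big_morph (fun x => x ^+ q)) => [x y|]; rewrite ?HD ?cj0. Qed.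
Lemma cj_nat (b : bool) : ((b%:R : F) ^+ q) = b%:R.
Proof. by case: b; rewrite ?cj0 ?cj1. Qed.
Lemma cj_eq0 (x : F) : (x ^+ q == 0) = (x == 0).
Proof. by rewrite expf_eq0; case: q Hq. Qed.

Lemma trace_nz : exists y : F, y + y ^+ q != 0.
Proof.
have [y Hy|H0] := pickP (fun y : F => y + y ^+ q != 0); first by exists y.
exfalso.
pose p : {poly F} := 'X^q + 'X.
have sp : size p = q.+1.
  by rewrite /p size_addl ?size_polyXn // size_polyX ltnS.
have p0 : p != 0 by rewrite -size_poly_eq0 sp.
have := max_poly_roots p0 (rs := enum F).
rewrite enum_uniq sp ltnS -cardE Hcard.
have -> : all (root p) (enum F).
  apply/allP => y _; rewrite /root /p hornerD hornerXn hornerX addrC.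
  by have := H0 y => /= /negbFE.
move=> /(_ isT isT); rewrite leqNgt.
by rewrite -{1}(expn1 q) ltn_exp2l.
Qed.

Lemma norm_surj (a : F) : a != 0 -> a ^+ q = a -> exists s : F, s * s ^+ q = a.
Proof.
move=> a0 aq.
pose N := (#|F|.-1)%N.
have HN : forall x : F, x != 0 -> x ^+ N = 1.
  move=> x x0; apply: (mulfI x0); rewrite mulr1 -exprS /N prednK ?expf_card //.
  by rewrite Hcard expn_gt0; case: q Hq.
have N0 : (0 < N)%N by rewrite /N Hcard -subn1 subn_gt0 -{1}(expn0 q) ltn_exp2l.
have [z zprim] : exists z : F, N.-primitive_root z.
  have := @cyclic.has_prim_root F N (enum [set~ (0:F)]) N0.
  case/(_ _ _ _)/Wrap.
  - apply/allP => x; rewrite mem_enum in_setC1 => x0.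
    by rewrite unity_rootE HN.
  - exact: enum_uniq.
  - by rewrite -cardE cardsC1.
  by case/hasP=> z _ zp; exists z.
case: (prim_rootP zprim (HN a a0)) => [[k _] /= kdef].
have dq : (q.-1 * q.+1 = N)%N.
  rewrite /N Hcard; case: (q) Hq => // q' _; rewrite expnS expn1 /=; nia.
have : (N %| k * q.-1)%N.
  rewrite (prim_order_dvd zprim) exprM -kdef.
  apply/eqP; apply: (mulfI a0); rewrite mulr1 -exprS prednK ?aq //; case: q Hq => //.
rewrite -dq mulnC dvdn_pmul2r; last by case: q Hq => // -[].
case/dvdnP=> m km.
exists (z ^+ m); by rewrite -exprM -exprD -mulnS -km kdef.
Qed.

Definition gstar m n (A : 'M[F]_(m, n)) : 'M[F]_(n, m) := \matrix_(i, j) (A j i) ^+ q.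

Lemma gstarE m n (A : 'M[F]_(m, n)) i j : gstar A i j = (A j i) ^+ q.
Proof. by rewrite mxE. Qed.
Lemma mxstarE n (A : 'M[F]_n) : mxstar q A = gstar A.
Proof. by apply/matrixP => i j; rewrite !mxE. Qed.
Lemma hermP n (A : 'M[F]_n) : Defs.hermitian q A = (gstar A == A).
Proof. by rewrite /Defs.hermitian mxstarE. Qed.
Lemma gstarK m n (A : 'M[F]_(m, n)) : gstar (gstar A) = A.
Proof. by apply/matrixP => i j; rewrite !mxE HK. Qed.
Lemma gstarD m n (A B : 'M[F]_(m, n)) : gstar (A + B) = gstar A + gstar B.
Proof. by apply/matrixP => i j; rewrite !mxE HD. Qed.
Lemma gstarN m n (A : 'M[F]_(m, n)) : gstar (- A) = - gstar A.
Proof. by apply/matrixP => i j; rewrite !mxE cjN. Qed.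
Lemma gstarB m n (A B : 'M[F]_(m, n)) : gstar (A - B) = gstar A - gstar B.
Proof. by rewrite gstarD gstarN. Qed.
Lemma gstar0 m n : gstar (0 : 'M[F]_(m, n)) = 0.
Proof. by apply/matrixP => i j; rewrite !mxE cj0. Qed.
Lemma gstar1 n : gstar (1%:M : 'M[F]_n) = 1%:M.
Proof. by apply/matrixP => i j; rewrite !mxE cj_nat eq_sym. Qed.
Lemma gstarZ m n c (A : 'M[F]_(m, n)) : gstar (c *: A) = c ^+ q *: gstar A.
Proof. by apply/matrixP => i j; rewrite !mxE cjM. Qed.
Lemma gstarM m n p (A : 'M[F]_(m, n)) (B : 'M[F]_(n, p)) :
  gstar (A *m B) = gstar B *m gstar A.
Proof.
apply/matrixP => i j; rewrite !mxE cj_sum; apply: eq_bigr => k _.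
by rewrite !mxE cjM mulrC.
Qed.
Lemma gstar_block m1 m2 n1 n2 (Aul : 'M[F]_(m1, n1)) (Aur : 'M[F]_(m1, n2))
  (Adl : 'M[F]_(m2, n1)) (Adr : 'M[F]_(m2, n2)) :
  gstar (block_mx Aul Aur Adl Adr) =
  block_mx (gstar Aul) (gstar Adl) (gstar Aur) (gstar Adr).
Proof.
have E : forall m n (A : 'M[F]_(m, n)), gstar A = (map_mx (fun x => x ^+ q) A)^T.
  by move=> m n A; apply/matrixP => i j; rewrite !mxE.
by rewrite !E map_block_mx tr_block_mx.
Qed.
Lemma gstar_delta m n (i : 'I_m) (j : 'I_n) : gstar (delta_mx i j) = delta_mx j i.
Proof. by apply/matrixP => a b; rewrite !mxE cj_nat andbC. Qed.
Lemma gstar_pid m n r : gstar (pid_mx r : 'M[F]_(m, n)) = pid_mx r.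
Proof. apply/matrixP => a b; rewrite !mxE cj_nat; congr (_%:R).
by case: (eqVneq (a : nat) b) => [->|]; rewrite ?eqxx // eq_sym => /negbTE ->. Qed.

Lemma herm_congr m n (P : 'M[F]_(m, n)) (A : 'M[F]_n) : gstar A = A ->
  gstar (P *m A *m gstar P) = P *m A *m gstar P.
Proof. by move=> hA; rewrite !gstarM gstarK hA mulmxA. Qed.

Lemma herm_entry n (A : 'M[F]_n) i j : gstar A = A -> A i j = (A j i) ^+ q.
Proof. by move=> hA; rewrite -{1}hA gstarE. Qed.

Lemma qform m n (Q : 'M[F]_(m, n)) (Z : 'M[F]_n) k :
  (Q *m Z *m gstar Q) k k = \sum_a Q k a * \sum_b Z a b * (Q k b) ^+ q.
Proof.
rewrite !mxE.
under eq_bigr => b _ do rewrite !mxE mulr_suml.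
rewrite exchange_big; apply: eq_bigr => a _; rewrite mulr_sumr.
by apply: eq_bigr => b _; rewrite mulrA.
Qed.

Lemma sum_delta n (i : 'I_n) (f : 'I_n -> F) :
  \sum_a (a == i)%:R * f a = f i.
Proof.
rewrite (bigD1 i) //= eqxx mul1r big1 ?addr0 // => a /negbTE ->.
by rewrite mul0r.
Qed.
Lemma sum_delta' n (i : 'I_n) (f : 'I_n -> F) :
  \sum_a f a * (a == i)%:R = f i.
Proof. by rewrite -(sum_delta i f); apply: eq_bigr => a _; rewrite mulrC. Qed.

Lemma qform2 n (Q Z : 'M[F]_n) k (x y : F) i j :
  (forall a, Q k a = x * (a == j)%:R + y * (a == i)%:R) ->
  (Q *m Z *m gstar Q) k k =
  x * (Z j j * x ^+ q + Z j i * y ^+ q) + y * (Z i j * x ^+ q + Z i i * y ^+ q).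
Proof.
move=> hQ; rewrite qform.
under eq_bigr => a _ do under eq_bigr => b _ do
  rewrite hQ HD !cjM !cj_nat mulrDr ![_ * (_ * _)]mulrA ![_ * (_ == _)%:R]mulrC.
under eq_bigr => a _ do rewrite big_split /= !sum_delta.
under eq_bigr => a _ do rewrite hQ mulrDl ![_ * (_ == _)%:R]mulrC -!mulrA.
by rewrite big_split /= !sum_delta.
Qed.


Lemma unit_gstar n (Q : 'M[F]_n) : Q \in unitmx -> gstar Q \in unitmx.
Proof.
move=> uQ; have : gstar Q *m gstar (invmx Q) = 1%:M by rewrite -gstarM mulVmx // gstar1.
by case/mulmx1_unit.
Qed.

Lemma rank_Ml m n (Q : 'M[F]_m) (A : 'M[F]_(m, n)) : Q \in unitmx -> \rank (Q *m A) = \rank A.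
Proof.
by move=> uQ; rewrite -mxrank_tr trmx_mul mxrankMfree ?mxrank_tr // row_free_unit unitmx_tr.
Qed.

Lemma rank_congr n (Q A : 'M[F]_n) : Q \in unitmx -> \rank (Q *m A *m gstar Q) = \rank A.
Proof.
by move=> uQ; rewrite mxrankMfree ?rank_Ml // row_free_unit unit_gstar.
Qed.

Lemma pivotA n (W : 'M[F]_n.+1) i : gstar W = W -> W i i != 0 ->
  exists Q, Q \in unitmx /\ (Q *m W *m gstar Q) 0 0 = 1.
Proof.
move=> hW Wi0.
have Wq : (W i i) ^+ q = W i i by rewrite -herm_entry.
have [s ss] : exists s, s * s ^+ q = (W i i)^-1.
  by apply: norm_surj; rewrite ?invr_eq0 // cjV Wq.
have s0 : s != 0.
  by apply: contraNneq (invr_neq0 Wi0) => s0; rewrite -ss s0 mul0r.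
exists (s *: tperm_mx 0 i); split.
  by rewrite unitmxZ ?unitfE // unitmx_perm.
rewrite (@qform2 _ _ _ _ s 0 i i).
  rewrite cj0 !mulr0 !mul0r !addr0.
  by rewrite mulrCA ss mulfV.
move=> a; by rewrite !mxE perm.tpermL mul0r addr0 eq_sym.
Qed.


Lemma pivotB n (Z : 'M[F]_n) : gstar Z = Z -> Z != 0 ->
  exists Q, exists i, Q \in unitmx /\ (Q *m Z *m gstar Q) i i != 0.
Proof.
move=> hZ Z0.
have [i Zi|Zd] := pickP (fun i => Z i i != 0).
  by exists 1%:M, i; rewrite gstar1 mul1mx mulmx1 unitmx1.
have [[i j] /= Zij|Z00] := pickP (fun ij : 'I_n * 'I_n => Z ij.1 ij.2 != 0); last first.
  case/negP: Z0; apply/eqP/matrixP => i j; rewrite mxE.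
  by have := Z00 (i, j) => /= /negbFE/eqP.
have Zd' : forall k, Z k k = 0 by move=> k; have := Zd k => /= /negbFE/eqP.
have [y Ty] := trace_nz.
pose c := y / Z i j.
have cZ : c * Z i j = y by rewrite /c mulfVK.
exists (1%:M + c *: delta_mx j i), j; split.
  have : (1%:M + c *: delta_mx j i) *m (1%:M - c *: delta_mx j i) = 1%:M.
    rewrite mulmxDl !mulmxBr !mul1mx mulmx1 -!scalemxAl -!scalemxAr.
    rewrite mul_delta_mx_cond.
    have -> : (i == j) = false.
      by apply/negbTE; apply: contraNneq Zij => ->; rewrite Zd'.
    by rewrite mulr0n !scaler0 subr0 subrK.
  by case/mulmx1_unit.
rewrite (@qform2 _ _ _ _ 1 c i j).
  rewrite !Zd' cj1 !mulr1 !mul0r add0r addr0 mul1r (herm_entry j i hZ) -cjM addrC.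
  by rewrite [Z i j * _]mulrC cZ.
by move=> a; rewrite !mxE eqxx /= mul1r eq_sym; case: (a == i); rewrite ?mulr1 ?mulr0.
Qed.


Lemma congr_comp m n p (A : 'M[F]_(m, n)) (B : 'M[F]_(n, p)) (Z : 'M[F]_p) :
  (A *m B) *m Z *m gstar (A *m B) = A *m (B *m Z *m gstar B) *m gstar A.
Proof. by rewrite gstarM !mulmxA. Qed.

Lemma pivot n (Z : 'M[F]_n.+1) : gstar Z = Z -> Z != 0 ->
  exists Q, Q \in unitmx /\ (Q *m Z *m gstar Q) 0 0 = 1.
Proof.
move=> hZ Z0; have [Q0 [i [uQ0 Wi]]] := pivotB hZ Z0.
have [Q1 [uQ1 W1]] := pivotA (herm_congr Q0 hZ) Wi.
by exists (Q1 *m Q0); rewrite congr_comp unitmx_mul uQ1 uQ0.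
Qed.

Lemma pid_block n r :
  (pid_mx r.+1 : 'M[F]_(1 + n)) = block_mx (1%:M : 'M_1) 0 0 (pid_mx r).
Proof.
apply/matrixP => i j.
rewrite -[i]splitK -[j]splitK; case: (split i) => i'; case: (split j) => j' /=.
- by rewrite block_mxEul !mxE !ord1.
- by rewrite block_mxEur !mxE !ord1.
- by rewrite block_mxEdl !mxE !ord1.
- by rewrite block_mxEdr !mxE /= eqSS ltnS.
Qed.

Lemma unit_lblock n1 n2 (A : 'M[F]_n1) (C : 'M[F]_(n2, n1)) (D : 'M[F]_n2) :
  A \in unitmx -> D \in unitmx -> block_mx A 0 C D \in unitmx.
Proof. by rewrite !unitmxE det_lblock => uA uD; rewrite unitrM uA uD. Qed.

Lemma ulsub00 n (A : 'M[F]_(1 + n)) : ulsubmx A 0 0 = A 0 0.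
Proof. by rewrite !mxE; congr (A _ _); apply: val_inj. Qed.

Lemma diagonalize n (Z : 'M[F]_n) : gstar Z = Z ->
  exists r, exists Q, [/\ (r <= n)%N, Q \in unitmx & Q *m Z *m gstar Q = pid_mx r].
Proof.
elim: n Z => [|n IH] Z hZ.
  exists 0%N, 1%:M; split => //; first exact: unitmx1.
  by apply/matrixP => i; case: i.
have [->|Z0] := eqVneq Z 0.
  exists 0%N, 1%:M; split => //; first exact: unitmx1.
  by apply/matrixP => i j; rewrite mulmx0 mul0mx !mxE ltn0 andbF.
have [Q1 [uQ1 W00]] := pivot hZ Z0.
pose W1 : 'M[F]_(1 + n, 1 + n) := Q1 *m Z *m gstar Q1.
have hW : gstar W1 = W1 by apply: herm_congr.
pose b := ursubmx W1; pose X := drsubmx W1.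
have ul : ulsubmx W1 = 1%:M.
  apply/matrixP => a c; rewrite !ord1 ulsub00 [RHS]mxE /=; exact: W00.
have [dl hX] : dlsubmx W1 = gstar b /\ gstar X = X.
  have E0 := hW; rewrite -[W1]submxK gstar_block in E0.
  case/eq_block_mx: E0 => _ h2 _ h4.
  by split => //; rewrite /b -h2 gstarK.
pose E : 'M[F]_(1 + n) := block_mx 1%:M 0 (- gstar b) 1%:M.
have uE : E \in unitmx by apply: unit_lblock; apply: unitmx1.
have EW : E *m W1 *m gstar E = block_mx 1%:M 0 0 (X - gstar b *m b).
  rewrite -[W1]submxK ul dl -/b -/X /E gstar_block gstar1 gstar0 gstarN gstarK.
  rewrite !mulmx_block !gstar1 !mul1mx !mul0mx !mulmx0 !mulmx1 !addr0 !addNr mul0mx add0r.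
  by rewrite mul1mx addNr mulNmx addrC.
have hX' : gstar (X - gstar b *m b) = X - gstar b *m b.
  by rewrite gstarB gstarM gstarK hX.
have [r' [Q' [r'n uQ' eQ']]] := IH _ hX'.
pose Q2 : 'M[F]_(1 + n) := block_mx 1%:M 0 0 Q'.
have uQ2 : Q2 \in unitmx by apply: unit_lblock => //; apply: unitmx1.
exists r'.+1, (Q2 *m E *m Q1); split => //.
  by rewrite !unitmx_mul uQ2 uE uQ1.
rewrite congr_comp -/W1 congr_comp EW /Q2 (@gstar_block 1 n 1 n) !gstar1 !gstar0.
rewrite !(@mulmx_block _ 1 n 1 n 1 n) !mul1mx !mul0mx !mulmx0 !mulmx1 !addr0 !add0r eQ'.
by rewrite (@mul0mx _ 1 n n) (pid_block n r').
Qed.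


Definition fsum (chi : F -> algC) n (Z : 'M[F]_n) : algC :=
  \sum_(A in herm_rank q F n 1) chi (\tr (mxstar q A *m Z)).

Lemma inj_congr n (Q : 'M[F]_n) : Q \in unitmx -> injective (fun A => gstar Q *m A *m Q).
Proof.
move=> uQ A B /= eAB.
have ugQ := unit_gstar uQ.
move: eAB => /(congr1 (fun M => invmx (gstar Q) *m M *m invmx Q)) /=.
by rewrite !mulmxA !mulVmx // !mul1mx -!mulmxA !mulmxV // !mulmx1.
Qed.

Lemma fsum_congr chi n (Q Z D : 'M[F]_n) : Q \in unitmx ->
  Q *m Z *m gstar Q = D -> fsum chi Z = fsum chi D.
Proof.
move=> uQ eD; rewrite /fsum (reindex (fun A => gstar Q *m A *m Q)).
  have memP : forall A, (gstar Q *m A *m Q \in herm_rank q F n 1) = (A \in herm_rank q F n 1).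
    move=> A; rewrite !inE !hermP gstarM gstarM gstarK !mulmxA.
    rewrite (inj_eq (inj_congr uQ) (gstar A) A).
    by rewrite mxrankMfree ?row_free_unit // rank_Ml ?unit_gstar.
  apply: eq_big => [A|A]; rewrite ?memP // inE hermP => /andP [/eqP hA _].
  rewrite !mxstarE gstarM gstarM gstarK hA -!mulmxA mxtrace_mulC -!mulmxA.
  by rewrite -eD !mulmxA.
exists (fun A => gstar (invmx Q) *m A *m invmx Q) => A _.
  rewrite !mulmxA -gstarM mulmxV // gstar1 mul1mx -mulmxA mulmxV //.
  by rewrite mulmx1.
rewrite !mulmxA -gstarM mulVmx // gstar1 mul1mx -mulmxA mulVmx //.
by rewrite mulmx1.
Qed.

Lemma fsum_rank chi n (Z : 'M[F]_n) : gstar Z = Z ->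
  fsum chi Z = Qk q chi n 1 (\rank Z).
Proof.
move=> hZ; have [r [Q [rn uQ eQ]]] := diagonalize hZ.
have -> : \rank Z = r by rewrite -(rank_congr Z uQ) eQ rank_pid_mx.
by rewrite (fsum_congr chi uQ eQ).
Qed.


Lemma tr_gstar n (A : 'M[F]_n) : \tr (gstar A) = (\tr A) ^+ q.
Proof. by rewrite /mxtrace cj_sum; apply: eq_bigr => i _; rewrite mxE. Qed.

Lemma tr_real n (A B : 'M[F]_n) : gstar A = A -> gstar B = B ->
  (\tr (A *m B)) ^+ q = \tr (A *m B).
Proof. by move=> hA hB; rewrite -tr_gstar gstarM hA hB mxtrace_mulC. Qed.

Variable chi : F -> algC.
Hypothesis Hchi0 : chi 0 = 1.
Hypothesis Hchi : forall a b : F, a ^+ q = a -> b ^+ q = b -> chi (a + b) = chi a * chi b.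
Variable a0 : F.
Hypothesis Ha0q : a0 ^+ q = a0.
Hypothesis Ha0 : chi a0 != 1.

Lemma chi_trace : exists y : F, chi (y + y ^+ q) != 1.
Proof.
have [y0 Ty0] := trace_nz.
set b := y0 + y0 ^+ q in Ty0.
have bq : b ^+ q = b by rewrite /b HD HK addrC.
exists (a0 / b * y0).
rewrite cjM cjM cjV Ha0q bq -mulrDr -/b mulfVK //.
Qed.


Definition isdiag n (A : 'M[F]_n) := [forall i, forall j, (i != j) ==> (A i j == 0)].

Lemma inM n (X : 'M[F]_n) :
  (X \in zero_diag_herm q F n) = (gstar X == X) && [forall i, X i i == 0].
Proof. by rewrite inE hermP. Qed.

Lemma addM n (X Y : 'M[F]_n) : X \in zero_diag_herm q F n -> Y \in zero_diag_herm q F n ->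
  X + Y \in zero_diag_herm q F n.
Proof.
rewrite !inM => /andP [/eqP hX /forallP dX] /andP [/eqP hY /forallP dY].
rewrite gstarD hX hY eqxx /=; apply/forallP => i.
by rewrite mxE (eqP (dX i)) (eqP (dY i)) addr0.
Qed.

Lemma oppM n (X : 'M[F]_n) : X \in zero_diag_herm q F n -> - X \in zero_diag_herm q F n.
Proof.
rewrite !inM => /andP [/eqP hX /forallP dX].
rewrite gstarN hX eqxx /=; apply/forallP => i.
by rewrite mxE (eqP (dX i)) oppr0.
Qed.

Lemma tr_delta n (A : 'M[F]_n) i j : \tr (A *m delta_mx i j) = A j i.
Proof.
rewrite /mxtrace (bigD1 j) //= big1 ?addr0.
  rewrite mxE (bigD1 i) //= big1 ?addr0; first by rewrite mxE !eqxx mulr1.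
  by move=> k /negbTE ki; rewrite mxE ki mulr0.
move=> k /negbTE kj; rewrite mxE big1 // => l _.
by rewrite mxE kj andbF mulr0.
Qed.

Lemma Ssum_nondiag n (A : 'M[F]_n) : gstar A = A -> ~~ isdiag A ->
  \sum_(p in setX (zero_diag_herm q F n) (zero_diag_herm q F n))
     chi (\tr (mxstar q A *m (p.1 - p.2))) = 0.
Proof.
move=> hA /forallPn [i /forallPn [j]]; rewrite negb_imply => /andP [ij Aij].
have [y Ty] := chi_trace.
pose c := y / A i j.
pose X0 := c *: delta_mx j i + c ^+ q *: delta_mx i j.
have X0M : X0 \in zero_diag_herm q F n.
  rewrite inM; apply/andP; split.
    by rewrite /X0 gstarD !gstarZ !gstar_delta HK addrC.
  apply/forallP => k; rewrite !mxE.
  case: (eqVneq k j) => [->|kj]; last by rewrite andbF mulr0 add0r; case: (k == i); rewrite ?mulr0.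
  by rewrite [j == i]eq_sym (negbTE ij) /= !mulr0 addr0.
pose a := \tr (A *m X0).
have ea : a = y + y ^+ q.
  rewrite /a mulmxDr mxtraceD -!scalemxAr !mxtraceZ !tr_delta (herm_entry j i hA).
  by rewrite -cjM /c mulfVK.
have aq : a ^+ q = a by rewrite ea HD HK addrC.
set S := \sum_(p in _) _.
have eS : S = chi a * S.
  rewrite {1}/S (reindex (fun p => (p.1 + X0, p.2))); last first.
    exists (fun p => (p.1 - X0, p.2)) => p _ /=; by rewrite ?addrK ?subrK -?surjective_pairing.
  rewrite /S mulr_sumr; apply: eq_big => [[p1 p2]|[p1 p2]].
    rewrite /= !in_setX; congr (_ && _); apply/idP/idP => h.
      by rewrite -(addrK X0 p1) addM ?oppM.
    by rewrite addM.
  rewrite /= !in_setX => /andP [p1M p2M].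
  have DM : p1 - p2 \in zero_diag_herm q F n.
    by rewrite addM ?oppM // -(addrK X0 p1) addM ?oppM.
  rewrite addrAC addrC mulmxDr mxtraceD mxstarE hA Hchi //.
  by apply: tr_real => //; move: DM; rewrite inM => /andP [/eqP ->].
have : (1 - chi a) * S = 0 by rewrite mulrBl mul1r -eS subrr.
move/eqP; rewrite mulf_eq0 subr_eq0 eq_sym ea (negbTE Ty) /=.
by move/eqP.
Qed.

Lemma Ssum_diag n (A : 'M[F]_n) : gstar A = A -> isdiag A ->
  \sum_(p in setX (zero_diag_herm q F n) (zero_diag_herm q F n))
     chi (\tr (mxstar q A *m (p.1 - p.2))) =
  #|setX (zero_diag_herm q F n) (zero_diag_herm q F n)|%:R.
Proof.
move=> hA dA; rewrite -sumr_const; apply: eq_bigr => [[p1 p2]].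
rewrite /= !in_setX => /andP [p1M p2M].
have : p1 - p2 \in zero_diag_herm q F n by rewrite addM ?oppM.
rewrite inM => /andP [_ /forallP dD].
rewrite mxstarE hA.
have -> : \tr (A *m (p1 - p2)) = 0.
  rewrite /mxtrace big1 // => k _; rewrite mxE big1 // => l _.
  case: (eqVneq l k) => [->|lk]; first by rewrite (eqP (dD k)) mulr0.
  by move/forallP: dA => /(_ k) /forallP /(_ l); rewrite eq_sym lk /= => /eqP ->; rewrite mul0r.
by rewrite Hchi0.
Qed.


Lemma dual_ne0 n : (0 < n)%N -> dual_inner_dist q chi (zero_diag_herm q F n) 1 != 0.
Proof.
move=> n0.
set M := zero_diag_herm q F n.
set P := setX M M.
have M0 : (0 : 'M[F]_n) \in M.
  by rewrite inM gstar0 eqxx /=; apply/forallP => i; rewrite mxE.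
have m0 : (0 < #|M|)%N by apply/card_gt0P; exists 0.
have step1 : \sum_(i < n.+1) Qk q chi n 1 i *
    (#|[set XY in setX M M | \rank (XY.1 - XY.2) == i]|%:R) =
    \sum_(p in P) fsum chi (p.1 - p.2).
  rewrite (partition_big (fun p => inord (\rank (p.1 - p.2)) : 'I_n.+1) xpredT) //.
  apply: eq_bigr => i _; rewrite mulr_natr -sumr_const.
  apply: eq_big => [[p1 p2]|[p1 p2]].
    rewrite inE /P; congr (_ && _).
    by rewrite -val_eqE /= inordK // ltnS rank_leq_col.
  rewrite inE in_setX => /andP [/andP [p1M p2M] /eqP ri].
  have DM : p1 - p2 \in M by rewrite addM ?oppM.
  move: DM; rewrite inM => /andP [/eqP hD _].
  by rewrite fsum_rank // ri.
have step2 : \sum_(p in P) fsum chi (p.1 - p.2) =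
    (\sum_(A in herm_rank q F n 1) (isdiag A * #|P|)%N)%:R.
  rewrite /fsum exchange_big natr_sum; apply: eq_bigr => A.
  rewrite inE hermP => /andP [/eqP hA _].
  case: (boolP (isdiag A)) => dA.
    by rewrite Ssum_diag // mul1n.
  by rewrite Ssum_nondiag.
rewrite /dual_inner_dist /inner_dist.
under eq_bigr => i _ do rewrite mulrA.
rewrite -mulr_suml step1 step2.
apply: mulf_neq0; last by rewrite invr_eq0 pnatr_eq0 -lt0n.
rewrite pnatr_eq0 -lt0n.
have pid1 : (pid_mx 1 : 'M[F]_n) \in herm_rank q F n 1.
  rewrite inE hermP gstar_pid eqxx rank_pid_mx //.
rewrite (bigD1 (pid_mx 1)) //= ltn_addr // muln_gt0.
have -> : isdiag (pid_mx 1 : 'M[F]_n).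
  by apply/forallP => i; apply/forallP => j; apply/implyP => ij; move: ij; rewrite -val_eqE mxE => /negbTE ->.
by rewrite cardsX muln_gt0 m0.
Qed.

End Work.

Unset Implicit Arguments.

Theorem theorem5p5 (q : nat) (F : finFieldType) (n : nat) (chi : F -> algC) :
  (exists p e : nat, [/\ prime p, (0 < e)%N & q = (p ^ e)%N]) ->
  #|F| = (q ^ 2)%N ->
  (2 <= n)%N ->
  nontrivial_additive_char q chi ->
  forall t : nat, (1 <= t <= n)%N ->
  ~ is_design q chi (zero_diag_herm q F n) t.
Proof.
move=> [p [e [pp e0 qE]]] Hcard n2 [Hchi0 Hchi [a0 [Ha0q Ha0]]] t /andP [t1 tn] Hd.
have Hq : (1 < q)%N.
  rewrite qE; apply: leq_trans (prime_gt1 pp) _.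
  by rewrite -{1}(expn1 p) leq_pexp2l // prime_gt0.
have pc : p \in [pchar F] by apply: card_finPcharP pp; rewrite Hcard qE -expnM.
have HD : forall x y : F, (x + y) ^+ q = x ^+ q + y ^+ q.
  by move=> x y; apply: exprDn_pchar; rewrite qE pnatX (pnatE _ pp) pc.
have HK : forall x : F, (x ^+ q) ^+ q = x.
  by move=> x; rewrite -exprM mulnn -Hcard expf_card.
have := dual_ne0 Hq HD HK Hcard Hchi0 Hchi Ha0q Ha0 (ltnW n2).
by rewrite (Hd 1 t1) eqxx.
Qed.
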